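(* Let $L\ge1$ and consider a continuous-time Markov chain on $\{0,\dots,L\}$ with jump rates $q(\cdot,\cdot)$, reversible with respect to a probability measure $p$. Assume that for some $\alpha,\beta>0$: (a) $\min_{n\in\{1,\dots,L\}}\max\big(q(n,n-1),q(n-1,n)\big)\ge\alpha$; (b) for every $n\in\{0,\dots,L\}$, $\min\big(\sum_{m\le n}p(m),\ \sum_{m\ge n}p(m)\big)\le\beta\,p(n)$. Then the relaxation time (inverse spectral gap) of the chain is at most $\beta L/\alpha$. *)

(* Defs.v *)
From HB Require Import structures.
From mathcomp Require Import all_boot all_order all_algebra.
From mathcomp Require Import boolp classical_sets reals.
Set Implicit Arguments. Unset Strict Implicit. Unset Printing Implicit Defensive.
Import Order.TTheory GRing.Theory Num.Theory.
Local Open Scope ring_scope.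
Local Open Scope classical_set_scope.

Section Chain.
Context {R : realType} {L : nat}.
Implicit Types (p : 'I_L.+1 -> R) (q : 'I_L.+1 -> 'I_L.+1 -> R) (f : 'I_L.+1 -> R).

Definition expect p f : R := \sum_(x < L.+1) p x * f x.

Definition variance p f : R := \sum_(x < L.+1) p x * (f x - expect p f) ^+ 2.

Definition dirichlet p q f : R :=
  2^-1 * \sum_(x < L.+1) \sum_(y < L.+1) p x * q x y * (f x - f y) ^+ 2.

Definition spectral_gap p q : R :=
  inf [set r : R | exists f, variance p f != 0 /\ r = dirichlet p q f / variance p f].

Definition relaxation_time p q : R := (spectral_gap p q)^-1.

Definition is_prob p : Prop := (forall x, 0 < p x) /\ \sum_(x < L.+1) p x = 1.

Definition is_rate q : Prop := forall x y, x != y -> 0 <= q x y.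

Definition reversible p q : Prop := forall x y, p x * q x y = p y * q y x.
End Chain.

(* Main.v *)
Require Import Defs.
From HB Require Import structures.
From mathcomp Require Import all_boot all_order all_algebra.
From mathcomp Require Import boolp classical_sets reals.
From mathcomp Require Import ring lra.
Import Order.TTheory GRing.Theory Num.Theory.
Local Open Scope ring_scope.

Lemma sum_indic (R : realType) (G : nat -> R) k n :
  \sum_(0 <= y < n) (y == k)%:R * G y = (k < n)%:R * G k.
Proof.
elim: n => [|n IH]; first by rewrite big_nil ltn0 mul0r.
rewrite big_nat_recr //= IH ltnS.
rewrite (eq_sym n k).

case: (ltngtP k n) => h /=.
- by rewrite !mul0r ?addr0.
- by rewrite !mul0r ?addr0.
- by rewrite h !mul0r add0r.
Qed.

Lemma cs_seq (R : realType) (a : nat -> R) (s : seq nat) :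
  (\sum_(i <- s) a i) ^+ 2 <= (size s)%:R * \sum_(i <- s) a i ^+ 2.
Proof.
elim: s => [|x s IH]; first by rewrite !big_nil /= mul0r expr2 mul0r.
rewrite !big_cons /=.
set S := \sum_(i <- s) a i in IH *; set Q := \sum_(i <- s) a i ^+2 in IH *.
set k := (size s)%:R in IH *.
have Q0 : 0 <= Q by apply: sumr_ge0 => i _; exact: sqr_ge0.
have k0 : 0 <= k by exact: ler0n.
suff h : 2 * a x * S <= k * a x ^+2 + Q.
  rewrite -natr1 -/k. nra.
have [k_0|kpos] := eqVneq k 0.
  have -> : S = 0.
    apply/eqP; rewrite -sqrf_eq0 eq_le sqr_ge0 andbT.
    by rewrite k_0 mul0r in IH.
  rewrite k_0; lra.
have kp : 0 < k by rewrite lt_def kpos k0.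
have H : 0 <= k * (k * a x ^+ 2 + Q - 2 * a x * S).
  have := sqr_ge0 (k * a x - S). nra.
rewrite pmulr_rge0 // in H. lra.
Qed.

Lemma path_bound (R : realType) (f : nat -> R) (N x y : nat) : (x <= y <= N)%N ->
  (f y - f x)^+2 <= N%:R * \sum_(0 <= i < N)
     (if (x <= i)%N && (i < y)%N then (f i.+1 - f i)^+2 else 0).
Proof.
move=> /andP[xy yN].
rewrite -(telescope_sumr _ xy).

have := @cs_seq R (fun k => f k.+1 - f k) (index_iota x y).
move=> H; apply: (le_trans H).
rewrite /index_iota size_iota -/(index_iota x y).
have xN := leq_trans xy yN.
rewrite (@big_cat_nat _ _ _ x 0 N) // (@big_cat_nat _ _ _ y x N) //=.
rewrite [X in X + _]big1_seq; last first.
  by move=> i /andP[_]; rewrite mem_index_iota => /andP[_ hi]; rewrite leqNgt hi.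
rewrite [X in _ + (_ + X)]big1_seq; last first.
  by move=> i /andP[_]; rewrite mem_index_iota => /andP[hi _]; rewrite andbC ltnNge hi.
rewrite add0r addr0.
rewrite [X in _ <= _ * X](eq_big_nat _ _ (F2 := fun i => (f i.+1 - f i)^+2)); last first.
  by move=> i /andP[h1 h2]; rewrite h1 h2.
apply: ler_wpM2r; first by apply: sumr_ge0 => i _; exact: sqr_ge0.
rewrite ler_nat; exact: leq_trans (leq_subr x y) yN.
Qed.
Lemma var_pairs (R : realType) (n : nat) (p f : nat -> R) :
  \sum_(0 <= k < n) p k = 1 ->
  \sum_(0 <= x < n) \sum_(0 <= y < n) p x * p y * (f x - f y) ^+ 2 =
  2 * \sum_(0 <= x < n) p x * (f x - \sum_(0 <= k < n) p k * f k) ^+ 2.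
Proof.
move=> hp.
set E := \sum_(0 <= k < n) p k * f k.
have hg : \sum_(0 <= x < n) p x * (f x - E) = 0.
  under eq_bigr do rewrite mulrBr.
  by rewrite sumrB -mulr_suml hp mul1r subrr.
have e1 : forall x y, p x * p y * (f x - f y) ^+ 2 =
   (p x * (f x - E) ^+ 2) * p y + p x * (p y * (f y - E) ^+ 2)
   - 2 * (p x * (f x - E)) * (p y * (f y - E)).
  by move=> x y; ring.
under eq_bigr => x _ do under eq_bigr => y _ do rewrite e1.
under eq_bigr => x _ do rewrite sumrB big_split /= -!mulr_sumr hp hg.
under eq_bigr do rewrite ?mulr0 ?oppr0 ?addr0 ?subr0 ?mulr1.
rewrite big_split /= -mulr_suml hp mul1r; ring.
Qed.

Lemma T_ge0 (R : realType) (N : nat) (p f : nat -> R) (q : nat -> nat -> R) x y :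
  (forall k, 0 <= p k) ->
  (forall j k, (j < N.+1)%N -> (k < N.+1)%N -> j != k -> 0 <= q j k) ->
  (x < N.+1)%N -> (y < N.+1)%N -> 0 <= p x * q x y * (f x - f y) ^+ 2.
Proof.
move=> hp hq hx hy.
have [->|ne] := eqVneq x y; first by rewrite subrr expr2 !mulr0.
by rewrite mulr_ge0 ?sqr_ge0 // mulr_ge0 // hq.
Qed.

Lemma dir_lb (R : realType) (N : nat) (p f : nat -> R) (q : nat -> nat -> R) :
  (forall k, 0 <= p k) ->
  (forall j k, (j < N.+1)%N -> (k < N.+1)%N -> j != k -> 0 <= q j k) ->
  (forall j k, p j * q j k = p k * q k j) ->
  2 * \sum_(0 <= i < N) p i.+1 * q i.+1 i * (f i.+1 - f i) ^+ 2 <=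
  \sum_(0 <= x < N.+1) \sum_(0 <= y < N.+1) p x * q x y * (f x - f y) ^+ 2.
Proof.
move=> hp hq hrev.
set T := fun x y => p x * q x y * (f x - f y) ^+ 2.
have Tge0 : forall x y, (x < N.+1)%N -> (y < N.+1)%N -> 0 <= T x y.
  by move=> x y hx hy; exact: (@T_ge0 R N p f q x y hp hq hx hy).
apply: (@le_trans _ _ (\sum_(0 <= x < N.+1) \sum_(0 <= y < N.+1)
   ((y == x.+1)%:R * T x y + (x == y.+1)%:R * T x y))); last first.
  apply: ler_sum_nat => x /= hx; apply: ler_sum_nat => y /= hy.
  have hT := Tge0 x y hx hy.
  rewrite -/(T x y).
  have [e1|ne1] := eqVneq y x.+1.
    have -> : (x == y.+1) = false by rewrite e1 ltn_eqF.
    by rewrite /= mul1r mul0r addr0.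
  have [e2|ne2] := eqVneq x y.+1.
    by rewrite /= mul1r mul0r add0r.
  by rewrite /= !mul0r addr0.
under [X in _ <= X]eq_bigr do rewrite big_split /=.
rewrite [X in _ <= X]big_split /=.
rewrite [X in _ <= _ + X]exchange_big /=.
under [X in _ <= X + _]eq_bigr => x _ do rewrite (@sum_indic R (fun y => T x y)).
under [X in _ <= _ + X]eq_bigr => y _ do rewrite (@sum_indic R (fun x => T x y)).
rewrite !big_nat_recr //= ltnn !mul0r !addr0.
rewrite (eq_big_nat _ _ (F1 := fun x => (x.+1 < N.+1)%:R * T x x.+1)
   (F2 := fun i => p i.+1 * q i.+1 i * (f i.+1 - f i) ^+ 2)); last first.
  by move=> i /andP[_ hi]; rewrite ltnS hi mul1r /T hrev -opprB sqrrN.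
rewrite (eq_big_nat _ _ (F1 := fun y => (y.+1 < N.+1)%:R * T y.+1 y)
   (F2 := fun i => p i.+1 * q i.+1 i * (f i.+1 - f i) ^+ 2)); last first.
  by move=> i /andP[_ hi]; rewrite ltnS hi mul1r /T.
by rewrite mulr2n mulrDl mul1r.
Qed.

Lemma sum_cond_le (R : realType) n (P Q : pred nat) (p : nat -> R) :
  (forall k, 0 <= p k) -> (forall k, P k -> Q k) ->
  \sum_(0 <= k < n | P k) p k <= \sum_(0 <= k < n | Q k) p k.
Proof.
move=> hp hPQ; rewrite (big_mkcond P) (big_mkcond Q) /=. apply: ler_sum => k _.
case: (boolP (P k)) => hP; first by rewrite (hPQ _ hP).
by case: (Q k).
Qed.

Lemma edge_bound (R : realType) (N : nat) (p : nat -> R) (q : nat -> nat -> R) (alpha beta : R) i :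
  0 < alpha -> 0 < beta ->
  (forall k, 0 <= p k) -> \sum_(0 <= k < N.+1) p k = 1 ->
  (forall j k, (j < N.+1)%N -> (k < N.+1)%N -> j != k -> 0 <= q j k) ->
  (forall j k, p j * q j k = p k * q k j) ->
  (forall i, (i < N)%N -> alpha <= Num.max (q i.+1 i) (q i i.+1)) ->
  (forall n, (n < N.+1)%N -> Num.min (\sum_(0 <= k < N.+1 | (k <= n)%N) p k)
       (\sum_(0 <= k < N.+1 | (n <= k)%N) p k) <= beta * p n) ->
  (i < N)%N ->
  alpha * ((\sum_(0 <= k < N.+1 | (k <= i)%N) p k) * (\sum_(0 <= k < N.+1 | (i < k)%N) p k))
  <= beta * (p i.+1 * q i.+1 i).
Proof.
move=> ha0 hb0 hp hp1 hq hrev ha hb hi.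
set A := \sum_(0 <= k < N.+1 | (k <= i)%N) p k.
set B := \sum_(0 <= k < N.+1 | (i < k)%N) p k.
have hAB : A + B = 1.
  rewrite -hp1 (bigID (fun k => (k <= i)%N)) /=.
  by congr (_ + _); apply: eq_bigl => k; rewrite ltnNge.
have A0 : 0 <= A by apply: sumr_ge0.
have B0 : 0 <= B by apply: sumr_ge0.
have m1 : A <= beta * p i.+1 \/ B <= beta * p i.+1.
  have := hb i.+1; rewrite ltnS => /(_ hi); rewrite ge_min => /orP[h|h]; [left|right];
    apply: le_trans h; apply: sum_cond_le => // k hk;
    first [exact: leqW hk | exact: hk | exact: ltnW hk].
have m0 : A <= beta * p i \/ B <= beta * p i.
  have := hb i; rewrite ltnS => /(_ (ltnW hi)); rewrite ge_min => /orP[h|h]; [left|right];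
    apply: le_trans h; apply: sum_cond_le => // k hk;
    first [exact: leqW hk | exact: hk | exact: ltnW hk].
have hAB1 : A * B <= A by nra.
have hAB2 : A * B <= B by nra.
have hAB0 : 0 <= A * B by exact: mulr_ge0.
have := ha i hi; rewrite le_max => /orP[h|h].
  have e1 : A * B <= beta * p i.+1 by case: m1 => m1; lra.
  have f1 : 0 <= (q i.+1 i - alpha) * (A * B) by apply: mulr_ge0 => //; lra.
  have f2 : 0 <= q i.+1 i * (beta * p i.+1 - A * B) by apply: mulr_ge0; lra.
  nra.
rewrite hrev.
have e1 : A * B <= beta * p i by case: m0 => m0; lra.
have f1 : 0 <= (q i i.+1 - alpha) * (A * B) by apply: mulr_ge0 => //; lra.
have f2 : 0 <= q i i.+1 * (beta * p i - A * B) by apply: mulr_ge0; lra.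
nra.
Qed.

Lemma key_sum (R : realType) (N : nat) (p f : nat -> R) :
  \sum_(0 <= x < N.+1) \sum_(0 <= y < N.+1) p x * p y *
     \sum_(0 <= i < N) (if (x <= i)%N && (i < y)%N then (f i.+1 - f i) ^+ 2 else 0)
  = \sum_(0 <= i < N) (f i.+1 - f i) ^+ 2 *
     ((\sum_(0 <= k < N.+1 | (k <= i)%N) p k) * (\sum_(0 <= k < N.+1 | (i < k)%N) p k)).
Proof.
under eq_bigr => x _ do under eq_bigr => y _ do rewrite mulr_sumr.
under eq_bigr => x _ do rewrite exchange_big /=.
rewrite exchange_big /=.
apply: eq_bigr => i _.
rewrite (big_mkcond (fun k => (k <= i)%N)) (big_mkcond (fun k => (i < k)%N)) /=.
rewrite big_distrl /= mulr_sumr.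
apply: eq_bigr => x _.
rewrite big_distrr /= mulr_sumr.
apply: eq_bigr => y _.
by case: (x <= i)%N; case: (i < y)%N => /=; ring.
Qed.

Lemma main_nat (R : realType) (N : nat) (p f : nat -> R) (q : nat -> nat -> R) (alpha beta : R) :
  0 < alpha -> 0 < beta ->
  (forall k, 0 <= p k) -> \sum_(0 <= k < N.+1) p k = 1 ->
  (forall j k, (j < N.+1)%N -> (k < N.+1)%N -> j != k -> 0 <= q j k) ->
  (forall j k, p j * q j k = p k * q k j) ->
  (forall i, (i < N)%N -> alpha <= Num.max (q i.+1 i) (q i i.+1)) ->
  (forall n, (n < N.+1)%N -> Num.min (\sum_(0 <= k < N.+1 | (k <= n)%N) p k)
       (\sum_(0 <= k < N.+1 | (n <= k)%N) p k) <= beta * p n) ->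
  alpha * \sum_(0 <= x < N.+1) p x * (f x - \sum_(0 <= k < N.+1) p k * f k) ^+ 2 <=
  beta * N%:R * (2^-1 * \sum_(0 <= x < N.+1) \sum_(0 <= y < N.+1) p x * q x y * (f x - f y) ^+ 2).
Proof.
move=> ha0 hb0 hp hp1 hq hrev ha hb.
set V := \sum_(0 <= x < N.+1) p x * (f x - _) ^+ 2.
set W := \sum_(0 <= x < N.+1) \sum_(0 <= y < N.+1) p x * q x y * (f x - f y) ^+ 2.
set D := \sum_(0 <= i < N) p i.+1 * q i.+1 i * (f i.+1 - f i) ^+ 2.
have hD : 2 * D <= W by exact: dir_lb.
set S := \sum_(0 <= i < N) (f i.+1 - f i) ^+ 2 *
     ((\sum_(0 <= k < N.+1 | (k <= i)%N) p k) * (\sum_(0 <= k < N.+1 | (i < k)%N) p k)).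
set J := fun x y => \sum_(0 <= i < N)
   (if (x <= i)%N && (i < y)%N then (f i.+1 - f i) ^+ 2 else 0).
have J0 : forall x y, 0 <= J x y.
  by move=> x y; apply: sumr_ge0 => i _; case: ifP => _ //; exact: sqr_ge0.
have hV : 2 * V <= 2 * (N%:R * S).
  rewrite -var_pairs //.
  apply: (@le_trans _ _ (\sum_(0 <= x < N.+1) \sum_(0 <= y < N.+1)
      p x * p y * (N%:R * (J x y + J y x)))).
    apply: ler_sum_nat => x /= hx; apply: ler_sum_nat => y /= hy.
    apply: ler_wpM2l; first exact: mulr_ge0.
    have hN : (0 : R) <= N%:R by exact: ler0n.
    case: (leqP x y) => hxy.
      have := @path_bound R f N x y; rewrite hxy -ltnS hy => /(_ isT) h.
      rewrite -opprB sqrrN; apply: le_trans h _; apply: ler_wpM2l => //.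
      by rewrite lerDl.
    have := @path_bound R f N y x; rewrite (ltnW hxy) -ltnS hx => /(_ isT) h.
    apply: le_trans h _; apply: ler_wpM2l => //.
    by rewrite lerDr.
  have e : forall x y, p x * p y * (N%:R * (J x y + J y x)) =
     N%:R * (p x * p y * J x y) + N%:R * (p y * p x * J y x).
    by move=> x y; ring.
  under eq_bigr => x _ do under eq_bigr => y _ do rewrite e.
  under eq_bigr => x _ do rewrite big_split /=.
  rewrite big_split /= [X in _ + X]exchange_big /=.
  under eq_bigr => x _ do rewrite -mulr_sumr.
  rewrite -!mulr_sumr /J key_sum -/S; lra.
have hS : alpha * S <= beta * D.
  rewrite /S /D mulr_sumr mulr_sumr; apply: ler_sum_nat => i /= hi.
  have := @edge_bound R N p q alpha beta i ha0 hb0 hp hp1 hq hrev ha hb hi.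
  have := sqr_ge0 (f i.+1 - f i).
  set c := p i.+1 * q i.+1 i; set d := (f i.+1 - f i) ^+ 2.
  set AB := (\sum_(0 <= k < N.+1 | (k <= i)%N) p k) * _.
  move=> h1 h2.
  have -> : beta * (c * d) = d * (beta * c) by ring.
  rewrite mulrCA; apply: ler_wpM2l => //.
have hV' : V <= N%:R * S by lra.
apply: le_trans (ler_wpM2l (ltW ha0) hV') _.
rewrite mulrCA.
apply: le_trans (ler_wpM2l (ler0n _ _) hS) _.
have -> : beta * N%:R * (2^-1 * W) = N%:R * (beta * (2^-1 * W)) by ring.
apply: ler_wpM2l; first exact: ler0n.
apply: ler_wpM2l; first exact: ltW.
lra.
Qed.

Lemma sum_ordE (R : realType) (L : nat) (P : pred nat) (G : 'I_L.+1 -> R) :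
  \sum_(x < L.+1 | P x) G x = \sum_(0 <= k < L.+1 | P k) G (inord k).
Proof. by rewrite big_mkord; apply: eq_bigr => x _; rewrite inord_val. Qed.

Lemma sum_ordE0 (R : realType) (L : nat) (G : 'I_L.+1 -> R) :
  \sum_(x < L.+1) G x = \sum_(0 <= k < L.+1) G (inord k).
Proof. by rewrite big_mkord; apply: eq_bigr => x _; rewrite inord_val. Qed.

Lemma le_sum_term (R : realType) n (G : 'I_n -> R) i :
  (forall j, 0 <= G j) -> G i <= \sum_j G j.
Proof. by move=> h; rewrite (bigD1 i) //= lerDl; apply: sumr_ge0 => j _; exact: h. Qed.

Theorem lemma4p8 (R : realType) (L : nat) (hL : (1 <= L)%N)
  (p : 'I_L.+1 -> R) (q : 'I_L.+1 -> 'I_L.+1 -> R) (alpha beta : R)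
  (hp : is_prob p) (hq : is_rate q) (hrev : reversible p q)
  (halpha : 0 < alpha) (hbeta : 0 < beta)
  (ha : forall n : nat, (1 <= n <= L)%N ->
          alpha <= Num.max (q (inord n) (inord n.-1)) (q (inord n.-1) (inord n)))
  (hb : forall n : 'I_L.+1,
          Num.min (\sum_(m < L.+1 | (m <= n)%N) p m) (\sum_(m < L.+1 | (n <= m)%N) p m)
          <= beta * p n) :
  0 < spectral_gap p q /\ relaxation_time p q <= beta * L%:R / alpha.
Proof.
have [hpos hsum] := hp.
have hL0 : (0 : R) < L%:R by rewrite ltr0n.
have kpos : 0 < alpha / (beta * L%:R) by rewrite divr_gt0 // mulr_gt0.
have Vge0 : forall f, 0 <= variance p f.
  by move=> f; apply: sumr_ge0 => x _; rewrite mulr_ge0 ?sqr_ge0 // ltW.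
have key : forall f, variance p f != 0 ->
    alpha / (beta * L%:R) <= dirichlet p q f / variance p f.
  move=> f hv.
  have Vp : 0 < variance p f by rewrite lt_def hv Vge0.
  have H := @main_nat R L (fun k => p (inord k)) (fun k => f (inord k))
     (fun j k => q (inord j) (inord k)) alpha beta halpha hbeta.
  have eV : variance p f = \sum_(0 <= x < L.+1) p (inord x) *
      (f (inord x) - \sum_(0 <= k < L.+1) p (inord k) * f (inord k)) ^+ 2.
    by rewrite /variance /expect !sum_ordE0.
  have eD : dirichlet p q f = 2^-1 * \sum_(0 <= x < L.+1) \sum_(0 <= y < L.+1)
      p (inord x) * q (inord x) (inord y) * (f (inord x) - f (inord y)) ^+ 2.
    rewrite /dirichlet sum_ordE0; congr (_ * _); apply: eq_bigr => k _.
    by rewrite sum_ordE0.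
  rewrite -eV -eD in H.
  have H' : alpha * variance p f <= beta * L%:R * dirichlet p q f.
    apply: H.
    - by move=> k; exact: ltW.
    - by rewrite -sum_ordE0.
    - move=> j k hj hk ne; apply: hq; apply/eqP => e.
      move: ne; have := congr1 (@nat_of_ord _) e; rewrite !inordK // => ->.
      by rewrite eqxx.
    - by move=> j k; exact: hrev.
    - by move=> i hi; apply: (ha i.+1); rewrite /= hi.
    - by move=> n hn; have := hb (inord n); rewrite inordK // (@sum_ordE R L (fun k => (k <= n)%N)) (@sum_ordE R L (fun k => (n <= k)%N)).
  rewrite ler_pdivlMr // mulrAC ler_pdivrMr ?mulr_gt0 //.
  by rewrite [X in _ <= X]mulrC; exact: H'.
set S := [set r : R | exists f, variance p f != 0 /\ r = dirichlet p q f / variance p f]%classic.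
have hne : (S !=set0)%classic.
  pose f0 := fun x : 'I_L.+1 => ((x : nat) == 0%N)%:R : R.
  exists (dirichlet p q f0 / variance p f0); exists f0; split => //.
  have hE : p ord0 <= expect p f0.
    have := @le_sum_term R L.+1 (fun x => p x * f0 x) ord0.
    by rewrite /f0 /= mulr1; apply => j; rewrite mulr_ge0 // ltW.
  have h1 := @le_sum_term R L.+1 (fun x => p x * (f0 x - expect p f0) ^+ 2) (inord 1).
  have hv : 0 < variance p f0.
    apply: lt_le_trans (h1 _); last by move=> j; rewrite mulr_ge0 ?sqr_ge0 // ltW.
    rewrite /f0 /= inordK ?ltnS // /= sub0r sqrrN mulr_gt0 // exprn_gt0 //.
    exact: lt_le_trans (hpos _) hE.
  by rewrite gt_eqF.
have hgap : alpha / (beta * L%:R) <= spectral_gap p q.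
  apply: lb_le_inf => //.
  by move=> r [f [hv ->]]; exact: key.
have gpos : 0 < spectral_gap p q by exact: lt_le_trans hgap.
split => //.
rewrite /relaxation_time.
have -> : beta * L%:R / alpha = (alpha / (beta * L%:R))^-1.
  by rewrite invf_div.
by rewrite lef_pV2 ?posrE.
Qed.
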